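(* Let $F$ be a minimally unsatisfiable clause-set and $(v,w)$ a singular tuple for $F$ with singularity-degree tuple $(1,1)$. Let $C,D\in F$ be the two clauses containing the variable $v$. 1. Assume $w$ is not 1-singular for $F$. Then $w$ is 2-singular for $F$; if $E_0\in F$ is its main clause and $E_1,E_2\in F$ its two side clauses, then $\{E_1,E_2\}=\{C,D\}$; $v$ is 1-singular for $\mathrm{DP}_w(F)$; and thus $(w,v)$ is a singular tuple for $F$ with singularity-degree tuple $(2,1)$. 2. Otherwise ($w$ is 1-singular for $F$): $v$ is 1-singular for $\mathrm{DP}_w(F)$; thus $(w,v)$ is a singular tuple for $F$ with singularity-degree tuple $(1,1)$; and if $E_1,E_2$ are the two clauses of $F$ containing the variable $w$, then $|\{C,D\}\cap\{E_1,E_2\}|\le1$.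
   Context: Literals are variables $v$ and complements $\overline{v}$; a clause is a finite set of literals with no complementary pair; a clause-set is a finite set of clauses; $\mathrm{ldeg}_F(x)$ is the number of clauses of $F$ containing literal $x$, $\mathrm{vdeg}_F(v)=\mathrm{ldeg}_F(v)+\mathrm{ldeg}_F(\overline{v})$. $\mathrm{DP}_v(F) := \{C \in F : v \notin \mathrm{var}(C)\} \cup \{(C \cup D)\setminus\{v,\overline{v}\} : C, D \in F,\ C \cap \overline{D} = \{v\}\}$; $\mathrm{DP}_{v,w}(F)=\mathrm{DP}_w(\mathrm{DP}_v(F))$. A variable $v$ is singular for $F$ if $\min(\mathrm{ldeg}_F(v),\mathrm{ldeg}_F(\overline{v}))=1$, $m$-singular if additionally $\mathrm{vdeg}_F(v)-1=m$; 1-singular means $\mathrm{ldeg}_F(v)=\mathrm{ldeg}_F(\overline{v})=1$. For a singular variable with singular literal $x$ (a literal of $v$ with $\mathrm{ldeg}_F(x)=1$), the main clause is the clause containing $x$ and the side clauses are those containing $\overline{x}$. For minimally unsatisfiable $F$, $(v,w)$ is a singular tuple if $v$ is singular for $F$ and $w$ is singular for $\mathrm{DP}_v(F)$; its singularity-degree tuple is $(m_1,m_2)$ where $v$ is $m_1$-singular for $F$ and $w$ is $m_2$-singular for $\mathrm{DP}_v(F)$. *)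

(* Defs.v *)
From HB Require Import structures.
From mathcomp Require Import all_boot all_order.
From mathcomp Require Import finmap.
Set Implicit Arguments. Unset Strict Implicit. Unset Printing Implicit Defensive.
Local Open Scope fset_scope.

(* Variables are natural numbers; a literal is a pair (variable, sign),
   sign = true for the positive literal v, false for the complement ~v. *)
Definition lit := (nat * bool)%type.
Definition lvar (x : lit) : nat := x.1.
Definition compl (x : lit) : lit := (x.1, ~~ x.2).
Definition pos (v : nat) : lit := (v, true).
Definition neg (v : nat) : lit := (v, false).

Definition clause := {fset lit}.
Definition complset (C : clause) : clause := [fset compl x | x in C].
Definition is_clause (C : clause) : bool := [forall x : C, compl (val x) \notin C].
Definition is_clauseset (F : {fset clause}) : bool := [forall C : F, is_clause (val C)].

Definition var (C : clause) : {fset nat} := [fset lvar x | x in C].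

Definition satisfies (f : nat -> bool) (F : {fset clause}) : Prop :=
  forall C, C \in F -> exists2 x, x \in C & f (lvar x) = x.2.
Definition satisfiable (F : {fset clause}) : Prop := exists f, satisfies f F.

Definition MU (F : {fset clause}) : Prop :=
  is_clauseset F /\ ~ satisfiable F /\ forall C, C \in F -> satisfiable (F `\ C).

Definition ldeg (F : {fset clause}) (x : lit) : nat := #|` [fset C in F | x \in C] |.
Definition vdeg (F : {fset clause}) (v : nat) : nat := ldeg F (pos v) + ldeg F (neg v).

Definition DP (v : nat) (F : {fset clause}) : {fset clause} :=
  [fset C in F | v \notin var C] `|`
  [fset (C `|` D) `\` [fset pos v; neg v] | C in F, D in F &
        C `&` complset D == [fset pos v]].

Definition singular (F : {fset clause}) (v : nat) : bool :=
  minn (ldeg F (pos v)) (ldeg F (neg v)) == 1.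
Definition msingular (F : {fset clause}) (v : nat) (m : nat) : bool :=
  singular F v && (vdeg F v - 1 == m).

Definition side_clauses (F : {fset clause}) (x : lit) : {fset clause} :=
  [fset E in F | compl x \in E].

Definition singular_tuple (F : {fset clause}) (v w m1 m2 : nat) : bool :=
  msingular F v m1 && msingular (DP v F) w m2.

(* Main.v *)
Require Import Defs.
From mathcomp Require Import all_boot all_order.
From mathcomp Require Import finmap.
Local Open Scope fset_scope.
Set Implicit Arguments. Unset Strict Implicit.

Lemma in_occ (F : {fset clause}) (x : lit) (E : clause) : (E \in [fset C in F | x \in C]) = (E \in F) && (x \in E).
Proof. by rewrite !inE. Qed.

Lemma in_complset (E : clause) (z : lit) : (z \in complset E) = (compl z \in E).
Proof.
apply/imfsetP/idP => [[y yE ->]|zE].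
  by rewrite /compl /= negbK; case: y yE.
by exists (compl z) => //; rewrite /compl /= negbK; case: z zE.
Qed.

Lemma in_var (u : nat) (E : clause) : (u \in var E) = (pos u \in E) || (neg u \in E).
Proof.
apply/imfsetP/idP => [[[n b] yE ->]|].
  by case: b yE => /= ->; rewrite ?orbT.
by case/orP => H; [exists (pos u)|exists (neg u)].
Qed.

Lemma inDP (u : nat) (F : {fset clause}) (E : clause) : E \in DP u F <-> (E \in F /\ u \notin var E) \/
  exists P Q, [/\ P \in F, Q \in F, P `&` complset Q = [fset pos u] &
    E = (P `|` Q) `\` [fset pos u; neg u]].
Proof.
rewrite /DP in_fsetU !inE; split.
  case/orP => [/andP[]|]; first by left.
  case/imfset2P => P PF [Q /=]; rewrite inE => /andP[QF /eqP e] ->.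
  by right; exists P, Q.
case => [[-> ->]//|[P [Q [PF QF e ->]]]]; apply/orP; right.
by apply/imfset2P; exists P => //; exists Q; rewrite //= inE QF e eqxx.
Qed.

Lemma complK (x : lit) : compl (compl x) = x.
Proof. by case: x => n b; rewrite /compl /= negbK. Qed.

Lemma lit_cases (a y : lit) : lvar a = lvar y -> a = y \/ a = compl y.
Proof.
case: a y => n b [m c] /= ->; rewrite /compl /=.
by case: b; case: c; auto.
Qed.

Lemma lit_w (a : lit) (u : nat) : lvar a = u -> a = pos u \/ a = neg u.
Proof. by case: a => n [] /= ->; auto. Qed.

Lemma lvar_compl (a : lit) : lvar (compl a) = lvar a.
Proof. by []. Qed.

Lemma clauseF (F : {fset clause}) (E : clause) (x : lit) :
  is_clauseset F -> E \in F -> x \in E -> compl x \in E -> False.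
Proof.
move=> /forallP H EF xE cxE.
have /forallP H2 := H [` EF].
by move: (H2 [` xE]) => /=; rewrite cxE.
Qed.

Lemma MU_flip (F : {fset clause}) (P : clause) (y : lit) :
  MU F -> P \in F -> y \in P ->
  (forall f : nat -> bool, satisfies f (F `\ P) ->
     (forall t, t \in P -> f (lvar t) != t.2) ->
     forall E, E \in F -> E != P -> compl y \in E ->
       exists2 t, t \in E & (lvar t != lvar y) && (f (lvar t) == t.2)) ->
  False.
Proof.
move=> [_ [unsat minH]] PF yP H.
have [f fs] := minH P PF.
have fals : forall t, t \in P -> f (lvar t) != t.2.
  move=> t tP; apply/negP => /eqP e; apply: unsat; exists f => E EF.
  case: (eqVneq E P) => [->|EP]; first by exists t.
  by apply: fs; rewrite in_fsetD1 EP EF.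
apply: unsat.
exists (fun n => if n == lvar y then y.2 else f n) => E EF.
case: (eqVneq E P) => [->|EP]; first by exists y; rewrite // eqxx.
have EF' : E \in F `\ P by rewrite in_fsetD1 EP EF.
have [z zE fz] := fs E EF'.
case: (eqVneq (lvar z) (lvar y)) => [e|ne].
  case: (lit_cases e) => [zy|zc].
    by exists y; rewrite -?zy // eqxx.
  have cyE : compl y \in E by rewrite -zc.
  have [t tE /andP[tn /eqP ft]] := H f fs fals E EF EP cyE.
  by exists t => //; rewrite (negbTE tn).
by exists z => //; rewrite (negbTE ne).
Qed.

Lemma noclash (F : {fset clause}) (P M : clause) (y a : lit) :
  MU F -> P \in F -> M \in F -> y \in P ->
  (forall E, E \in F -> compl y \in E -> E = M) ->
  a \in P -> compl a \in M -> a = y.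
Proof.
move=> mu PF MF yP uniq aP caM.
case: (eqVneq (lvar a) (lvar y)) => [e|ne].
  case: (lit_cases e) => // ac.
  by case: (clauseF (proj1 mu) PF yP); rewrite -ac.
case: (MU_flip mu PF yP) => f fs fals E EF EP cyE.
rewrite (uniq E EF cyE); exists (compl a) => //.
rewrite lvar_compl ne /=.
by move: (fals a aP); case: (f (lvar a)); case: (a.2).
Qed.

Lemma noclash' (F : {fset clause}) (P M : clause) (y a : lit) :
  MU F -> P \in F -> M \in F -> compl y \in M ->
  (forall E, E \in F -> y \in E -> E = P) ->
  a \in P -> compl a \in M -> a = y.
Proof.
move=> mu PF MF cyM uniq aP caM.
have := noclash mu MF PF cyM (y := compl y) (a := compl a).
rewrite !complK => h.
by rewrite -(complK a) (h uniq caM aP) complK.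
Qed.

Lemma ldeg1P (F : {fset clause}) (z : lit) : ldeg F z = 1 ->
  exists R, [/\ R \in F, z \in R & forall E, E \in F -> z \in E -> E = R].
Proof.
move/eqP/cardfs1P => [R e].
have : R \in [fset C in F | z \in C] by rewrite e in_fset1.
rewrite in_occ => /andP[RF zR]; exists R; split => // E EF zE.
have : E \in [fset C in F | z \in C] by rewrite in_occ EF zE.
by rewrite e in_fset1 => /eqP.
Qed.

Lemma ldeg_set (F : {fset clause}) (z : lit) (S : {fset clause}) :
  (forall E, (E \in F) && (z \in E) = (E \in S)) -> ldeg F z = #|` S|.
Proof. by move=> H; rewrite /ldeg; congr (#|` _|); apply/fsetP => E; rewrite in_occ H. Qed.

Lemma in_res (P Q : clause) (u : nat) (z : lit) :
  (z \in (P `|` Q) `\` [fset pos u; neg u]) = (lvar z != u) && ((z \in P) || (z \in Q)).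
Proof.
rewrite in_fsetD in_fsetU !inE; congr (_ && _).
by case: z => n [] /=; rewrite /pos /neg !xpair_eqE /= ?andbT ?andbF ?orbF.
Qed.

Lemma res_in_DP (F : {fset clause}) (P Q : clause) (y : lit) (u : nat) :
  lvar y = u -> P \in F -> Q \in F -> y \in P -> compl y \in Q ->
  (forall a, a \in P -> compl a \in Q -> a = y) ->
  (P `|` Q) `\` [fset pos u; neg u] \in DP u F.
Proof.
move=> yu PF QF yP cyQ H; apply/inDP; right.
case: y yu yP cyQ H => n [] /= -> yP cyQ H.
  exists P, Q; split => //; apply/fsetP => z.
  rewrite in_fsetI in_complset in_fset1.
  apply/andP/eqP => [[zP czQ]|->]; [exact: H | by split].
exists Q, P; split => //; last by rewrite fsetUC.
apply/fsetP => z; rewrite in_fsetI in_complset in_fset1.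
apply/andP/eqP => [[zQ czP]|->]; last by split.
have := H (compl z) czP; rewrite complK => /(_ zQ).
by case: z {zQ czP} => m b; rewrite /compl /= => -[-> ]; case: b.
Qed.

Lemma DP_nolit (F : {fset clause}) (u : nat) (E : clause) :
  E \in DP u F -> pos u \notin E.
Proof.
case/inDP => [[_]|[P [Q [_ _ _ ->]]]].
  by rewrite in_var negb_or => /andP[].
by rewrite in_res eqxx.
Qed.

Lemma DP_res_lits (P Q : clause) (u : nat) :
  P `&` complset Q = [fset pos u] -> pos u \in P /\ neg u \in Q.
Proof.
move=> e; have : pos u \in P `&` complset Q by rewrite e in_fset1.
by rewrite in_fsetI in_complset => /andP[].
Qed.

Lemma pair_eq (X Y A B : clause) :
  (X == A) || (X == B) -> (Y == A) || (Y == B) -> X != Y ->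
  [fset X; Y] = [fset A; B].
Proof.
case/orP => /eqP ->; case/orP => /eqP ->; rewrite ?eqxx //= => _.
by apply/fsetP => z; rewrite !in_fset2 orbC.
Qed.

From mathcomp Require Import zify.

Lemma msing1 (F : {fset clause}) (u : nat) :
  msingular F u 1 -> ldeg F (pos u) = 1 /\ ldeg F (neg u) = 1.
Proof. by rewrite /msingular /singular /vdeg => /andP[/eqP h1 /eqP h2]; lia. Qed.

Lemma msing1_mk (F : {fset clause}) (u : nat) :
  ldeg F (pos u) = 1 -> ldeg F (neg u) = 1 -> msingular F u 1.
Proof. by rewrite /msingular /singular /vdeg => -> ->. Qed.

Lemma msing2_mk (F : {fset clause}) (y : lit) :
  ldeg F y = 2 -> ldeg F (compl y) = 1 -> msingular F (lvar y) 2.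
Proof.
by case: y => n [] /= h1 h2; rewrite /msingular /singular /vdeg;
  rewrite /pos /neg /compl /= in h2 *; rewrite h1 h2.
Qed.

Lemma DPdeg_keep (F : {fset clause}) (w : nat) (p : lit) (Q0 : clause) :
  Q0 \in F -> p \in Q0 -> (forall E, E \in F -> p \in E -> E = Q0) ->
  w \notin var Q0 -> ldeg (DP w F) p = 1.
Proof.
move=> Q0F pQ0 uq wQ0.
rewrite (@ldeg_set _ _ [fset Q0]) ?cardfs1 // => E; rewrite in_fset1.
apply/andP/eqP => [[/inDP [[EF _]|[P [Q [PF QF e ->]]]] pE]|->].
- exact: uq.
- have [wP wQ] := DP_res_lits e.
  move: pE; rewrite in_res => /andP[_ /orP[pP|pQ]].
    by move: wQ0; rewrite in_var -(uq P PF pP) wP.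
  by move: wQ0; rewrite in_var -(uq Q QF pQ) wQ orbT.
- by split => //; apply/inDP; left.
Qed.

Lemma DPdeg_res (F : {fset clause}) (w : nat) (p y : lit) (Q0 E0 : clause) :
  MU F -> Q0 \in F -> p \in Q0 -> (forall E, E \in F -> p \in E -> E = Q0) ->
  lvar p != w -> lvar y = w -> y \in Q0 -> E0 \in F -> compl y \in E0 ->
  (forall E, E \in F -> compl y \in E -> E = E0) ->
  ldeg (DP w F) p = 1.
Proof.
move=> mu Q0F pQ0 uq pw yw yQ0 E0F cyE0 uq0.
have nc := noclash mu Q0F E0F yQ0 uq0.
have RD := res_in_DP yw Q0F E0F yQ0 cyE0 nc.
have cl := clauseF (proj1 mu).
rewrite (@ldeg_set _ _ [fset (Q0 `|` E0) `\` [fset pos w; neg w]]) ?cardfs1 // => E.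
rewrite in_fset1.
apply/andP/eqP => [[/inDP [[EF wE]|[P [Q [PF QF e ->]]]] pE]|->].
- move: wE; rewrite (uq E EF pE) in_var.
  by case: (lit_w yw) yQ0 => -> ->; rewrite ?orbT.
- have [wP wQ] := DP_res_lits e.
  move: pE; rewrite in_res => /andP[_ /orP[pP|pQ]].
    have PQ0 := uq P PF pP; subst P.
    have ey : y = pos w.
      case: (lit_w yw) => // ey; subst y.
      by case: (cl _ _ Q0F wP).
    subst y; by rewrite (uq0 Q QF wQ).
  have QQ0 := uq Q QF pQ; subst Q.
  have ey : y = neg w.
    case: (lit_w yw) => // ey; subst y.
    by case: (cl _ _ Q0F wQ).
  subst y; by rewrite (uq0 P PF wP) fsetUC.
- by split => //; rewrite in_res pw pQ0.
Qed.

Lemma wdeg (F : {fset clause}) (v : nat) (Cp Cn : clause) (z : lit) :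
  MU F -> Cp \in F -> Cn \in F -> pos v \in Cp -> neg v \in Cn ->
  (forall E, E \in F -> pos v \in E -> E = Cp) ->
  (forall E, E \in F -> neg v \in E -> E = Cn) ->
  lvar z != v -> ldeg (DP v F) z = 1 ->
  ((z \in Cp) && (z \in Cn) -> [fset E in F | z \in E] = [fset Cp; Cn]) /\
  (~~ ((z \in Cp) && (z \in Cn)) -> ldeg F z = 1).
Proof.
move=> mu CpF CnF pCp nCn uqp uqn zv /ldeg1P [Rz [RzG zRz uqz]].
set Rv := (Cp `|` Cn) `\` [fset pos v; neg v].
have nc := noclash mu CpF CnF pCp uqn.
have RvG : Rv \in DP v F := res_in_DP (y := pos v) erefl CpF CnF pCp nCn nc.
have RvF : Rv \notin F.
  apply/negP => RvF; apply: (MU_flip mu CpF pCp) => f fs fals E EF EP nE.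
  rewrite (uqn E EF nE).
  have RvCp : Rv != Cp by apply/eqP => e; move: pCp; rewrite -e in_res eqxx.
  have RvD : Rv \in F `\ Cp by rewrite in_fsetD1 RvCp RvF.
  have [t tR ft] := fs Rv RvD.
  move: tR; rewrite in_res => /andP[tv /orP[tCp|tCn]].
    by move: (fals t tCp); rewrite ft eqxx.
  by exists t => //; rewrite tv ft eqxx.
have Gmem : forall E, E \in DP v F -> E \in F /\ v \notin var E \/ E = Rv.
  move=> E /inDP [h|[P [Q [PF QF e ->]]]]; first by left.
  have [vP vQ] := DP_res_lits e.
  by right; rewrite /Rv (uqp P PF vP) (uqn Q QF vQ).
have Fmem : forall E, E \in F -> E != Cp -> E != Cn -> E \in DP v F.
  move=> E EF ECp ECn; apply/inDP; left; split => //.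
  rewrite in_var; apply/negP => /orP[h|h].
    by move: ECp; rewrite (uqp E EF h) eqxx.
  by move: ECn; rewrite (uqn E EF h) eqxx.
have keyF : forall E, E \in F -> z \in E -> E != Cp -> E != Cn -> E = Rz.
  by move=> E EF zE h1 h2; apply: uqz => //; apply: Fmem.
have [zC|zC] := boolP ((z \in Cp) || (z \in Cn)).
  have zRv : z \in Rv by rewrite in_res zv.
  have eRz : Rv = Rz := uqz Rv RvG zRv.
  have onlyC : forall E, E \in F -> z \in E -> (E == Cp) || (E == Cn).
    move=> E EF zE; apply/negPn/negP => /norP[h1 h2].
    by move: RvF; rewrite eRz -(keyF E EF zE h1 h2) EF.
  split.
    move=> /andP[zp zn]; apply/fsetP => E; rewrite in_occ in_fset2.
    apply/andP/idP => [[EF zE]|/orP[/eqP->|/eqP->]]; last by [].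
      exact: onlyC.
    by [].
  move=> nb; case/orP: zC => [zp|zn].
    have zn : z \notin Cn by move: nb; rewrite zp.
    rewrite (@ldeg_set _ _ [fset Cp]) ?cardfs1 // => E; rewrite in_fset1.
    apply/andP/eqP => [[EF zE]|->] //.
    by case/orP: (onlyC E EF zE) => /eqP // e; move: zn; rewrite -e zE.
  have zp : z \notin Cp by move: nb; rewrite zn andbT.
  rewrite (@ldeg_set _ _ [fset Cn]) ?cardfs1 // => E; rewrite in_fset1.
  apply/andP/eqP => [[EF zE]|->] //.
  by case/orP: (onlyC E EF zE) => /eqP // e; move: zp; rewrite -e zE.
split; first by move=> /andP[h1 h2]; move: zC; rewrite h1.
move=> _; move: zC; rewrite negb_or => /andP[zp zn].
have RzF : Rz \in F.
  case: (Gmem Rz RzG) => [[]//|e].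
  by move: zRz; rewrite e in_res zv (negbTE zp) (negbTE zn).
rewrite (@ldeg_set _ _ [fset Rz]) ?cardfs1 // => E; rewrite in_fset1.
apply/andP/eqP => [[EF zE]|->] //.
apply: keyF => //; apply/eqP => e; [move: zp | move: zn]; by rewrite -e zE.
Qed.

Theorem lemma39 (F : {fset clause}) (v w : nat) (C D : clause) :
  MU F ->
  singular_tuple F v w 1 1 ->
  C \in F -> D \in F -> C != D -> v \in var C -> v \in var D ->
  (~~ msingular F w 1 ->
     [/\ msingular F w 2,
         (forall x : lit, lvar x = w -> ldeg F x = 1 ->
            side_clauses F x = [fset C; D]),
         msingular (DP w F) v 1
       & singular_tuple F w v 2 1]) /\
  (msingular F w 1 ->
     [/\ msingular (DP w F) v 1,
         singular_tuple F w v 1 1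
       & forall E1 E2 : clause, E1 \in F -> E2 \in F -> E1 != E2 ->
            w \in var E1 -> w \in var E2 ->
            #|` [fset C; D] `&` [fset E1; E2] | <= 1]).
Proof.
move=> mu /andP[msv msw] CF DF CD vC vD.
have [dp dn] := msing1 msv.
have [Cp [CpF pCp uqp]] := ldeg1P dp.
have [Cn [CnF nCn uqn]] := ldeg1P dn.
have cl := clauseF (proj1 mu).
have inCpn : forall X, X \in F -> v \in var X -> (X == Cp) || (X == Cn).
  move=> X XF; rewrite in_var => /orP[h|h].
    by rewrite (uqp X XF h) eqxx.
  by rewrite (uqn X XF h) eqxx orbT.
have CDe : [fset C; D] = [fset Cp; Cn] := pair_eq (inCpn C CF vC) (inCpn D DF vD) CD.
rewrite CDe.
have CpCn : Cp != Cn.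
  by apply/eqP => e; apply: (cl Cn (pos v) CnF) => //; rewrite -e.
have [gp gn] := msing1 msw.
have wv : w != v.
  apply/eqP => e; subst w; have [R [RG pR _]] := ldeg1P gp.
  by move: (DP_nolit RG); rewrite pR.
have ncv := noclash mu CpF CnF pCp uqn.
split.
- move=> nms.
  have gl : forall y, lvar y = w -> ldeg (DP v F) y = 1 by move=> y /lit_w [->|->].
  have wd : forall y, lvar y = w ->
      ((y \in Cp) && (y \in Cn) -> [fset E in F | y \in E] = [fset Cp; Cn]) /\
      (~~ ((y \in Cp) && (y \in Cn)) -> ldeg F y = 1).
    move=> y yw; apply: (wdeg mu CpF CnF pCp nCn uqp uqn); last exact: gl.
    by rewrite yw.
  have [y [yw yCp yCn]] : exists y, [/\ lvar y = w, y \in Cp & y \in Cn].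
    have [hp|hp] := boolP ((pos w \in Cp) && (pos w \in Cn)).
      by case/andP: hp => *; exists (pos w).
    have [hn|hn] := boolP ((neg w \in Cp) && (neg w \in Cn)).
      by case/andP: hn => *; exists (neg w).
    move: nms; rewrite msing1_mk //; [exact: (wd (pos w) erefl).2 hp | exact: (wd (neg w) erefl).2 hn].
  have occy : [fset E in F | y \in E] = [fset Cp; Cn].
    by apply: (wd y yw).1; rewrite yCp yCn.
  have ldy : ldeg F y = 2 by rewrite /ldeg occy cardfs2 CpCn.
  have cyw : lvar (compl y) = w by rewrite lvar_compl.
  have ldc : ldeg F (compl y) = 1.
    apply: (wd _ cyw).2; apply/negP => /andP[h _]; exact: cl Cp y CpF yCp h.
  have ms2 : msingular F w 2 by rewrite -yw; apply: msing2_mk.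
  have [E0 [E0F cyE0 uq0]] := ldeg1P ldc.
  have ms3 : msingular (DP w F) v 1.
    apply: msing1_mk.
      by apply: (DPdeg_res mu CpF pCp uqp _ yw yCp E0F cyE0 uq0); rewrite eq_sym.
    by apply: (DPdeg_res mu CnF nCn uqn _ yw yCn E0F cyE0 uq0); rewrite eq_sym.
  split => //.
  + move=> x xw lx; rewrite /side_clauses.
    case: (lit_cases (etrans xw (esym yw))) => e; first by move: lx; rewrite e ldy.
    by rewrite e complK occy.
  + by rewrite /singular_tuple ms2 ms3.
- move=> ms1.
  have [wp wn] := msing1 ms1.
  have [E1 [E1F pE1 uq1]] := ldeg1P wp.
  have [E2 [E2F nE2 uq2]] := ldeg1P wn.
  have DPv : forall p Q0, lvar p = v -> Q0 \in F -> p \in Q0 ->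
      (forall E, E \in F -> p \in E -> E = Q0) -> ldeg (DP w F) p = 1.
    move=> p Q0 pv Q0F pQ0 uq.
    have pw : lvar p != w by rewrite pv eq_sym.
    have [wQ|wQ] := boolP (w \in var Q0); last exact: (DPdeg_keep Q0F pQ0 uq wQ).
    move: wQ; rewrite in_var => /orP[h|h].
      exact: (DPdeg_res (y := pos w) mu Q0F pQ0 uq pw erefl h E2F nE2 uq2).
    exact: (DPdeg_res (y := neg w) mu Q0F pQ0 uq pw erefl h E1F pE1 uq1).
  have ms3 : msingular (DP w F) v 1.
    by apply: msing1_mk; [apply: (DPv _ Cp) | apply: (DPv _ Cn)].
  split => //; first by rewrite /singular_tuple ms1 ms3.
  move=> X Y XF YF XY wX wY.
  have inE12 : forall Z, Z \in F -> w \in var Z -> (Z == E1) || (Z == E2).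
    move=> Z ZF; rewrite in_var => /orP[h|h].
      by rewrite (uq1 Z ZF h) eqxx.
    by rewrite (uq2 Z ZF h) eqxx orbT.
  rewrite (pair_eq (inE12 X XF wX) (inE12 Y YF wY) XY).
  have notboth : ~~ ((Cp \in [fset E1; E2]) && (Cn \in [fset E1; E2])).
    apply/negP; rewrite !in_fset2 => /andP[/orP[/eqP e1|/eqP e1] /orP[/eqP e2|/eqP e2]].
    - by move: CpCn; rewrite e1 e2 eqxx.
    - have := ncv (pos w); rewrite e1 e2 => /(_ pE1 nE2) [] e.
      by move: wv; rewrite e eqxx.
    - by have := ncv (neg w); rewrite e1 e2 => /(_ nE2 pE1)/(f_equal snd).
    - by move: CpCn; rewrite e1 e2 eqxx.
  have [Z sub] : exists Z, [fset Cp; Cn] `&` [fset E1; E2] `<=` [fset Z].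
    move: notboth; rewrite negb_and => /orP[h|h].
      exists Cn; apply/fsubsetP => Z; rewrite in_fsetI in_fset2 in_fset1.
      case/andP => /orP[/eqP e|e] h'; last by [].
      by subst Z; rewrite h' in h.
    exists Cp; apply/fsubsetP => Z; rewrite in_fsetI in_fset2 in_fset1.
    case/andP => /orP[e|/eqP e] h'; first by [].
    by subst Z; rewrite h' in h.
  by move: (fsubset_leq_card sub); rewrite cardfs1.
Qed.
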